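(* Let $G, G'$ be two distinct spanning trees of $K_{n,d}$ and let $e\in G$, $e'\in G'$ be edges such that $G\setminus e = G'\setminus e' = H$. Let the two connected components of $H$ have vertex sets $I^{(1)}\sqcup \bar J^{(1)}$ and $I^{(2)}\sqcup \bar J^{(2)}$ (with $I^{(k)}\subseteq[n]$, $\bar J^{(k)}\subseteq[\bar d]$). Then $G$ and $G'$ are compatible if and only if either ($e$ joins a vertex of $I^{(1)}$ to a vertex of $\bar J^{(2)}$ and $e'$ joins a vertex of $I^{(2)}$ to a vertex of $\bar J^{(1)}$) or ($e$ joins $I^{(2)}$ to $\bar J^{(1)}$ and $e'$ joins $I^{(1)}$ to $\bar J^{(2)}$). In particular, if $G$ and $G'$ are compatible then $e$ and $e'$ share no vertex.
   Context: Fix positive integers $n,d$. $K_{n,d}$ denotes the complete bipartite graph with left vertex set $[n]=\{1,\dots,n\}$ and right vertex set $[\bar d]=\{\bar 1,\dots,\bar d\}$; all graphs considered are subgraphs of $K_{n,d}$ (identified with their edge sets). Two acyclic subgraphs $G,G'$ of $K_{n,d}$ are called compatible if whenever both $G$ and $G'$ contain a perfect matching between the same pair of vertex sets $I\subseteq[n]$ and $\bar J\subseteq[\bar d]$, these two matchings are equal. *)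

(* Defs.v *)
From mathcomp Require Import all_boot.
Set Implicit Arguments. Unset Strict Implicit. Unset Printing Implicit Defensive.

(* Left vertices [n] are 'I_n, right vertices [\bar d] are 'I_d.
   A subgraph of K_{n,d} is identified with its edge set, a set of pairs
   (i, j) meaning the edge {i, \bar j}. *)
Definition edge (n d : nat) := ('I_n * 'I_d)%type.
Definition graph (n d : nat) := {set edge n d}.
Definition vertex (n d : nat) := ('I_n + 'I_d)%type.

Definition adj n d (G : graph n d) : rel (vertex n d) :=
  fun u v => match u, v with
             | inl i, inr j => (i, j) \in G
             | inr j, inl i => (i, j) \in G
             | _, _ => false
             end.

Definition acyclic n d (G : graph n d) : Prop :=
  forall p : seq (vertex n d), uniq p -> 3 <= size p -> ~~ cycle (adj G) p.

Definition connected_graph n d (G : graph n d) : Prop :=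
  forall u v : vertex n d, connect (adj G) u v.

Definition spanning_tree n d (G : graph n d) : Prop :=
  acyclic G /\ connected_graph G.

Definition vset n d (I : {set 'I_n}) (J : {set 'I_d}) : {set vertex n d} :=
  [set inl i | i in I] :|: [set inr j | j in J].

Definition is_component n d (H : graph n d) (S : {set vertex n d}) : Prop :=
  exists2 x, x \in S & S = [set y | connect (adj H) x y].

Definition perfect_matching n d (I : {set 'I_n}) (J : {set 'I_d})
  (M : graph n d) : Prop :=
  [/\ M \subset setX I J,
      forall i, i \in I -> #|[set e in M | e.1 == i]| = 1
    & forall j, j \in J -> #|[set e in M | e.2 == j]| = 1].

Definition compatible n d (G G' : graph n d) : Prop :=
  forall (I : {set 'I_n}) (J : {set 'I_d}) (M M' : graph n d),
    M \subset G -> M' \subset G' ->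
    perfect_matching I J M -> perfect_matching I J M' -> M = M'.

(* Main.v *)
Require Import Defs.
From mathcomp Require Import all_boot zify.
Set Implicit Arguments. Unset Strict Implicit. Unset Printing Implicit Defensive.


Section Basic.
Variables n d : nat.
Implicit Types (G H M : graph n d) (u v : vertex n d).

Lemma adj_sym G : symmetric (adj G).
Proof. by move=> [?|?] [?|?]. Qed.

Lemma connect_symG G : connect_sym (adj G).
Proof. exact/sym_connect_sym/adj_sym. Qed.

Lemma adj_subG G G' u v : G \subset G' -> adj G u v -> adj G' u v.
Proof. by move/subsetP=> s; case: u v => [?|?] [?|?] //= /s. Qed.

Lemma adj_split G (e : edge n d) u v : adj G u v ->
  adj (G :\ e) u v \/ (u = inl e.1 /\ v = inr e.2) \/ (u = inr e.2 /\ v = inl e.1).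
Proof.
case: e => a b; case: u v => [i|j] [i'|j'] //= h.
- have [E|N] := eqVneq (i, j') (a, b).
    by case: E => -> ->; right; left.
  by left; rewrite !inE N.
- have [E|N] := eqVneq (i', j) (a, b).
    by case: E => -> ->; right; right.
  by left; rewrite !inE N.
Qed.

Lemma connect_ind (T : finType) (r : rel T) (P : T -> Prop) x y :
  (forall a b, P a -> r a b -> P b) -> P x -> connect r x y -> P y.
Proof.
move=> st Px /connectP [p pth ->]; elim: p x pth Px => //= z p IH x /andP [rxz pz] Px.
by apply: IH pz _; apply: st rxz.
Qed.

Lemma mem_vset_l (I : {set 'I_n}) (J : {set 'I_d}) i : (inl i \in vset I J) = (i \in I).
Proof.
rewrite /vset inE; apply/orP/idP => [[/imsetP [k kI [->]] // | /imsetP [k _ //]] | iI].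
by left; apply/imsetP; exists i.
Qed.

Lemma mem_vset_r (I : {set 'I_n}) (J : {set 'I_d}) j : (inr j \in vset I J) = (j \in J).
Proof.
rewrite /vset inE; apply/orP/idP => [[/imsetP [k _ //] | /imsetP [k kI [->]] //] | iI].
by right; apply/imsetP; exists j.
Qed.

End Basic.


Section Uniq.
Variables n d : nat.
Variables (I : {set 'I_n}) (J : {set 'I_d}).

Definition pf (M : graph n d) i := [pick j | (i, j) \in M].
Definition pb (M : graph n d) j := [pick i | (i, j) \in M].

Lemma pf_some M i j : pf M i = Some j -> (i, j) \in M.
Proof. by rewrite /pf; case: pickP => // k h [<-]. Qed.
Lemma pb_some M i j : pb M j = Some i -> (i, j) \in M.
Proof. by rewrite /pb; case: pickP => // k h [<-]. Qed.

Lemma pm_uniq1 M i j j' : perfect_matching I J M -> (i, j) \in M -> (i, j') \in M -> j = j'.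
Proof.
case=> /subsetP sM h1 _ m1 m2.
have iI : i \in I by have := sM _ m1; rewrite inE => /andP [].
have /eqP/cards1P [z Ez] := h1 _ iI.
have : (i, j) \in [set e in M | e.1 == i] by rewrite inE m1 eqxx.
have : (i, j') \in [set e in M | e.1 == i] by rewrite inE m2 eqxx.
by rewrite Ez !inE => /eqP <- /eqP [->].
Qed.

Lemma pm_uniq2 M i i' j : perfect_matching I J M -> (i, j) \in M -> (i', j) \in M -> i = i'.
Proof.
case=> /subsetP sM _ h1 m1 m2.
have jJ : j \in J by have := sM _ m1; rewrite inE => /andP [].
have /eqP/cards1P [z Ez] := h1 _ jJ.
have : (i, j) \in [set e in M | e.2 == j] by rewrite inE m1 eqxx.
have : (i', j) \in [set e in M | e.2 == j] by rewrite inE m2 eqxx.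
by rewrite Ez !inE => /eqP <- /eqP [->].
Qed.

Lemma pf_in M i j : perfect_matching I J M -> (i, j) \in M -> pf M i = Some j.
Proof.
move=> pm m; rewrite /pf; case: pickP => [k mk | /(_ j)]; last by rewrite m.
by rewrite (pm_uniq1 pm m mk).
Qed.
Lemma pb_in M i j : perfect_matching I J M -> (i, j) \in M -> pb M j = Some i.
Proof.
move=> pm m; rewrite /pb; case: pickP => [k mk | /(_ i)]; last by rewrite m.
by rewrite (pm_uniq2 pm m mk).
Qed.

Lemma pm_ex1 M i : perfect_matching I J M -> i \in I -> exists j, (i, j) \in M.
Proof.
case=> _ h _ /h /eqP/cards1P [z Ez].
have : z \in [set e in M | e.1 == i] by rewrite Ez inE.
by rewrite inE => /andP [zM /eqP zi]; exists z.2; rewrite -zi -surjective_pairing.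
Qed.
Lemma pm_ex2 M j : perfect_matching I J M -> j \in J -> exists i, (i, j) \in M.
Proof.
case=> _ _ h /h /eqP/cards1P [z Ez].
have : z \in [set e in M | e.2 == j] by rewrite Ez inE.
by rewrite inE => /andP [zM /eqP zi]; exists z.1; rewrite -zi -surjective_pairing.
Qed.

Lemma pm_I M i j : perfect_matching I J M -> (i, j) \in M -> i \in I.
Proof. by case=> /subsetP s _ _ /s; rewrite inE => /andP []. Qed.
Lemma pm_J M i j : perfect_matching I J M -> (i, j) \in M -> j \in J.
Proof. by case=> /subsetP s _ _ /s; rewrite inE => /andP []. Qed.

Variables (G M M' : graph n d).
Hypotheses (acG : acyclic G) (sM : M \subset G) (sM' : M' \subset G)
  (pM : perfect_matching I J M) (pM' : perfect_matching I J M').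

Definition sig (u : vertex n d) : vertex n d :=
  match u with
  | inl i => if pf M i is Some j then inr j else u
  | inr j => if pb M' j is Some i then inl i else u
  end.

Lemma sig_inj : injective sig.
Proof.
move=> [i1|j1] [i2|j2] /=.
- case E1: (pf M i1) => [a|]; case E2: (pf M i2) => [b|] //.
    by move=> [eab]; subst b; rewrite (pm_uniq2 pM (pf_some E1) (pf_some E2)).
- case E1: (pf M i1) => [a|]; case E2: (pb M' j2) => [b|] //.
  + move=> [eab]; subst a; case: (pm_ex2 pM' (pm_J pM (pf_some E1))) => k mk.
    by rewrite (pb_in pM' mk) in E2.
  + move=> [eab]; subst b; case: (pm_ex1 pM (pm_I pM' (pb_some E2))) => k mk.
    by rewrite (pf_in pM mk) in E1.
- case E1: (pb M' j1) => [a|]; case E2: (pf M i2) => [b|] //.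
  + move=> [eab]; subst a; case: (pm_ex1 pM (pm_I pM' (pb_some E1))) => k mk.
    by rewrite (pf_in pM mk) in E2.
  + move=> [eab]; subst b; case: (pm_ex2 pM' (pm_J pM (pf_some E2))) => k mk.
    by rewrite (pb_in pM' mk) in E1.
- case E1: (pb M' j1) => [a|]; case E2: (pb M' j2) => [b|] //.
    by move=> [eab]; subst b; rewrite (pm_uniq1 pM' (pb_some E1) (pb_some E2)).
Qed.

Lemma pm_sub : M \subset M'.
Proof.
apply/subsetP => -[i j] m; apply/negPn/negP => nm'.
set v0 : vertex n d := inl i.
have s1 : sig v0 = inr j by rewrite /= (pf_in pM m).
have [i' m'] := pm_ex2 pM' (pm_J pM m).
have s2 : sig (inr j) = inl i' by rewrite /= (pb_in pM' m').
have ii' : i != i' by apply/eqP => E; subst i'; rewrite m' in nm'.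
set o := orbit sig v0.
have uo : uniq o := orbit_uniq _ _.
have co : fcycle sig o := cycle_orbit sig_inj _.
have nfix : forall u, u \in o -> sig u != u.
  move=> u; rewrite -fconnect_orbit fconnect_sym; last exact: sig_inj.
  move=> /iter_findex E; apply/negP => /eqP fu.
  move: E; rewrite (iter_fix _ fu) => E; move: s1; rewrite -E fu => uj.
  by move: E; rewrite uj.
have cG : cycle (adj G) o.
  apply: (sub_in_cycle (P := mem o)) co; last exact/allP.
  move=> u v uin _ /eqP <-; have := nfix u uin.
  case: u {uin} => [a|b] /=.
  - by case E: (pf M a) => [c|]; rewrite ?eqxx // => _; apply: (subsetP sM); apply: pf_some.
  - by case E: (pb M' b) => [c|]; rewrite ?eqxx // => _; apply: (subsetP sM'); apply: pb_some.
have sz : 3 <= size o.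
  have -> : 3 = size [:: v0; inr j; inl i'] by [].
  apply: uniq_leq_size; first by rewrite /= !inE /v0 /= andbT; apply/negP => /eqP [] /eqP; rewrite (negbTE ii').
  move=> w; rewrite !inE => /or3P [] /eqP ->; rewrite -fconnect_orbit.
  - exact: connect0.
  - by rewrite -s1; apply: fconnect1.
  - by rewrite -s2 -s1; apply: (connect_trans (fconnect1 _ _)); apply: fconnect1.
by move: (acG uo sz); rewrite cG.
Qed.

End Uniq.

Lemma pm_unique n d (I : {set 'I_n}) (J : {set 'I_d}) (G M M' : graph n d) :
  acyclic G -> M \subset G -> M' \subset G ->
  perfect_matching I J M -> perfect_matching I J M' -> M = M'.
Proof.
move=> ac s s' p p'; apply/eqP; rewrite eqEsubset.
by rewrite (pm_sub ac s s' p p') (pm_sub ac s' s p' p).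
Qed.


Section Count.
Variables n d : nat.
Variables (I : {set 'I_n}) (J : {set 'I_d}) (M : graph n d).
Hypothesis pM : perfect_matching I J M.

Lemma card_fst (A : {set 'I_n}) : #|[set x in M | x.1 \in A]| = #|I :&: A|.
Proof.
have <- : fst @: [set x in M | x.1 \in A] = I :&: A.
  apply/setP => i; apply/imsetP/idP.
    move=> [[a b]]; rewrite inE /= => /andP [m aA] ->.
    by rewrite inE aA (pm_I pM m).
  rewrite inE => /andP [iI iA]; have [j m] := pm_ex1 pM iI.
  by exists (i, j); rewrite // inE m.
rewrite card_in_imset //.
move=> [a b] [a' b']; rewrite !inE /= => /andP [m _] /andP [m' _] E; subst a'.
by rewrite (pm_uniq1 pM m m').
Qed.

Lemma card_snd (A : {set 'I_d}) : #|[set x in M | x.2 \in A]| = #|J :&: A|.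
Proof.
have <- : snd @: [set x in M | x.2 \in A] = J :&: A.
  apply/setP => j; apply/imsetP/idP.
    move=> [[a b]]; rewrite inE /= => /andP [m aA] ->.
    by rewrite inE aA (pm_J pM m).
  rewrite inE => /andP [jJ jA]; have [i m] := pm_ex2 pM jJ.
  by exists (i, j); rewrite // inE m.
rewrite card_in_imset //.
move=> [a b] [a' b']; rewrite !inE /= => /andP [m _] /andP [m' _] E; subst b'.
by rewrite (pm_uniq2 pM m m').
Qed.

End Count.

Lemma compat_lemma n d (G G' : graph n d) (e e' : edge n d) (I1 : {set 'I_n}) (J1 : {set 'I_d}) :
  acyclic G -> e \in G -> e' \in G' -> G :\ e = G' :\ e' ->
  (forall h, h \in G :\ e -> (h.1 \in I1) = (h.2 \in J1)) ->
  e.1 \in I1 -> e.2 \notin J1 -> e'.1 \notin I1 -> e'.2 \in J1 ->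
  compatible G G'.
Proof.
move=> acG eG eG' EH cons e1 e2 e'1 e'2 I J M M' sM sM' pM pM'.
have DA : forall (K : graph n d) f, K \subset G :\ e :|: [set f] ->
   [set x in K | x.1 \in I1] :\ f = [set x in K | x.2 \in J1] :\ f.
  move=> K f /subsetP sK; apply/setP => x; rewrite !inE.
  have [->|xf] := eqVneq x f; rewrite ?eqxx //=; case xK: (x \in K) => //=.
  by have := sK _ xK; rewrite !inE (negbTE xf) /= orbF => xH; rewrite cons // !inE.
have sM1 : M \subset G :\ e :|: [set e].
  apply/subsetP => x /(subsetP sM) xG; rewrite !inE; case: (x =P e) => //=.
  by move=> _; rewrite orbF.
have sM1' : M' \subset G :\ e :|: [set e'].
  apply/subsetP => x /(subsetP sM') xG; rewrite EH !inE; case: (x =P e') => //=.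
  by move=> _; rewrite orbF.
have c1 : #|I :&: I1| = (e \in M) + #|[set x in M | x.2 \in J1] :\ e|.
  by rewrite -(card_fst pM) (cardsD1 e) (DA _ _ sM1) inE e1 andbT.
have c2 : #|J :&: J1| = #|[set x in M | x.2 \in J1] :\ e|.
  by rewrite -(card_snd pM) (cardsD1 e) inE (negbTE e2) andbF.
have c3 : #|I :&: I1| = #|[set x in M' | x.2 \in J1] :\ e'|.
  by rewrite -(card_fst pM') (cardsD1 e') (DA _ _ sM1') inE (negbTE e'1) andbF.
have c4 : #|J :&: J1| = (e' \in M') + #|[set x in M' | x.2 \in J1] :\ e'|.
  by rewrite -(card_snd pM') (cardsD1 e') inE e'2 andbT.
have eM : e \notin M.
 apply/negP => eM; move: (c4); rewrite c2 -c3 c1 eM; move: (e' \in M') => y; set a := #|_ :\ e|; clearbody a.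
 move=> h; have := leq_addl y (true + a); by rewrite -h /= add1n ltnn.
have eM' : e' \notin M'.
 apply/negP => eM0; move: c4; rewrite c2 -c3 c1 eM0; move: (e \in M) => y; set a := #|_ :\ e|; clearbody a.
 move=> h; have : a < a by rewrite {2}h /= ltnS leq_addl.
 by rewrite ltnn.
apply: (pm_unique acG) pM pM' => //.
apply/subsetP => x xM'; have : x \in G' :\ e'.
  by rewrite !inE (subsetP sM' _ xM') andbT; apply: contra eM' => /eqP <-.
by rewrite -EH inE => /andP [].
Qed.

Section Alt.
Variables n d : nat.

Definition side (u : vertex n d) : bool := if u is inl _ then true else false.

Lemma adj_side (G : graph n d) u v : adj G u v -> side u != side v.
Proof. by case: u v => [?|?] [?|?]. Qed.

Lemma prev_at_last (T : eqType) (y : T) (l : seq T) z : y \notin l -> prev_at y y z l = last z l.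
Proof.
elim: l z => [|y' l IH] z /=; first by rewrite eqxx.
rewrite inE negb_or => /andP [ny yl]; rewrite (negbTE ny); exact: IH.
Qed.

Lemma prev_head (T : eqType) (y : T) (l : seq T) : uniq (y :: l) -> prev (y :: l) y = last y l.
Proof. by rewrite /= => /andP [yl _]; apply: prev_at_last. Qed.

Definition Mof (s : seq (vertex n d)) : graph n d :=
  [set x | (inl x.1 \in s) && (next s (inl x.1) == inr x.2)].

Lemma PM (s : seq (vertex n d)) : uniq s ->
  (forall u, u \in s -> side (next s u) != side u) ->
  perfect_matching [set a | inl a \in s] [set b | inr b \in s] (Mof s).
Proof.
move=> us alt; split.
- apply/subsetP => -[a b]; rewrite !inE /= => /andP [sa /eqP nb].
  by rewrite sa -nb mem_next.
- move=> i; rewrite inE => si.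
  have := alt _ si; case E: (next s (inl i)) => [//|j0] _.
  apply/eqP/cards1P; exists (i, j0); apply/setP => -[a b]; rewrite !inE /=.
  apply/idP/idP.
    by move=> /andP [/andP [sa /eqP nb] /eqP ai]; subst a; move: nb; rewrite E => -[->].
  by move=> /eqP [-> ->]; rewrite si E !eqxx.
- move=> j; rewrite inE => sj.
  have sp : prev s (inr j) \in s by rewrite mem_prev.
  have := alt _ sp; rewrite next_prev //; case E: (prev s (inr j)) => [i0|//] _.
  apply/eqP/cards1P; exists (i0, j); apply/setP => -[a b]; rewrite !inE /=.
  apply/idP/idP.
    move=> /andP [/andP [sa /eqP nb] /eqP bj]; subst b.
    by move: (prev_next us (inl a)); rewrite nb E => -[->].
  move=> /eqP [-> ->]; rewrite -E mem_prev sj next_prev // !eqxx //.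
Qed.

End Alt.

Lemma incompat n d (G G' : graph n d) (e e' : edge n d) :
  e \in G -> e' \in G' -> e != e' -> G :\ e = G' :\ e' ->
  connect (adj (G :\ e)) (inr e.2) (inr e'.2) ->
  connect (adj (G :\ e)) (inl e'.1) (inl e.1) ->
  ~~ connect (adj (G :\ e)) (inl e.1) (inr e.2) -> ~ compatible G G'.
Proof.
case: e e' => i j [i' j'] /= eG eG' ne EH c1 c2 nc comp.
set H := G :\ (i, j) in EH c1 c2 nc.
case/connectP: c1 => p0 pth0 l0; move: l0; case: (shortenP pth0) => p pth up _ lp.
case/connectP: c2 => q0 qth0 l1; move: l1; case: (shortenP qth0) => q qth uq _ lq.
pose r (u v : vertex n d) := if u is inl _ then adj G u v else adj G' u v.
have HG : H \subset G by exact: subD1set.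
have HG' : H \subset G' by rewrite EH; exact: subD1set.
have sub : subrel (adj H) r.
  by move=> [a|b] v h; rewrite /r; [apply: adj_subG HG h | apply: adj_subG HG' h].
set s := (inr j :: p) ++ (inl i' :: q).
have us : uniq s.
  rewrite cat_uniq up uq andbT; apply/hasPn => w wq; apply/negP => wp.
  have cw1 := path_connect pth wp.
  have cw2 := path_connect qth wq.
  move/negP: nc; apply.
  apply: (connect_trans _ (connect_trans cw2 _)).
    by rewrite connect_symG lq; apply: (path_connect qth); exact: mem_last.
  by rewrite connect_symG.
have cs : cycle r s.
  rewrite /s cat_cons /= rcons_cat cat_path (sub_path sub pth) /= -lp /= eG' /=.
  by rewrite rcons_path (sub_path sub qth) -lq /=.
have rs : forall u v, r u v -> side u != side v by move=> [?|?] v /adj_side.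
set M := Mof s.
set M' := Mof (rev s).
set I := [set a | inl a \in s]; set J := [set b | inr b \in s].
have pM : perfect_matching I J M.
  apply: PM => // u us'; rewrite eq_sym; apply: rs; exact: next_cycle cs us'.
have pM' : perfect_matching I J M'.
  have -> : I = [set a | inl a \in rev s] by apply/setP => a; rewrite !inE mem_rev.
  have -> : J = [set b | inr b \in rev s] by apply/setP => a; rewrite !inE mem_rev.
  apply: PM; first by rewrite rev_uniq.
  move=> u; rewrite mem_rev => us'; rewrite next_rev //; apply: rs; exact: prev_cycle cs us'.
have sM : M \subset G.
  apply/subsetP => -[a b]; rewrite inE => /andP [sa /eqP nb].
  by have := next_cycle cs sa; rewrite nb /r /=.
have sM' : M' \subset G'.
  apply/subsetP => -[a b]; rewrite inE mem_rev => /andP [sa /eqP nb].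
  by have := prev_cycle cs sa; rewrite -(next_rev us) nb /r /=.
have eM : (i, j) \in M.
  have ps : prev s (inr j) = inl i.
    by rewrite /s cat_cons prev_head -?cat_cons // last_cat /= -lq.
  rewrite inE -[(i,j).1]/i -[(i,j).2]/j -ps mem_prev next_prev // eqxx andbT.
  by rewrite /s mem_cat mem_head.
have eM' : (i, j) \notin M'.
  apply/negP => /(subsetP sM') ijG'.
  have : (i, j) \in G' :\ (i', j') by rewrite !inE ijG' andbT.
  by rewrite -EH !inE eqxx.
by move: eM'; rewrite -(comp I J M M' sM sM' pM pM') eM.
Qed.


Lemma conn_C n d (H : graph n d) x u v :
  u \in [set y | connect (adj H) x y] ->
  (v \in [set y | connect (adj H) x y]) = connect (adj H) u v.
Proof.
rewrite !inE => xu; apply/idP/idP => [xv | uv]; last exact: connect_trans xu uv.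
by rewrite connect_symG in xu; exact: connect_trans xu xv.
Qed.

Lemma cons_C n d (H : graph n d) x (h : edge n d) : h \in H ->
  (inl h.1 \in [set y | connect (adj H) x y]) = (inr h.2 \in [set y | connect (adj H) x y]).
Proof.
by move=> hH; apply/idP/idP => hin; rewrite (conn_C _ hin); apply: connect1; rewrite /= -surjective_pairing.
Qed.

Theorem mainTheorem1 (n d : nat) (G G' : graph n d) (e e' : edge n d)
  (I1 I2 : {set 'I_n}) (J1 J2 : {set 'I_d}) :
  0 < n -> 0 < d ->
  spanning_tree G -> spanning_tree G' -> G != G' ->
  e \in G -> e' \in G' -> G :\ e = G' :\ e' ->
  is_component (G :\ e) (vset I1 J1) ->
  is_component (G :\ e) (vset I2 J2) ->
  vset I1 J1 != vset I2 J2 ->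
  (compatible G G' <->
     ((e.1 \in I1 /\ e.2 \in J2 /\ e'.1 \in I2 /\ e'.2 \in J1) \/
      (e.1 \in I2 /\ e.2 \in J1 /\ e'.1 \in I1 /\ e'.2 \in J2)))
  /\ (compatible G G' -> e.1 != e'.1 /\ e.2 != e'.2).
Proof.
move=> _ _ [acG conG] [acG' conG'] GG' eG eG' EH [x1 x1V V1] [x2 x2V V2] V12.
set H := G :\ e in EH V1 V2.
have ne : e != e'.
  apply: contra GG' => /eqP E; subst e'.
  by rewrite -(setD1K eG) -(setD1K eG') -EH.
set a : vertex n d := inl e.1; set b : vertex n d := inr e.2.
set p : vertex n d := inl e'.1; set q : vertex n d := inr e'.2.
have cover : forall v, connect (adj H) v a || connect (adj H) v b.
  move=> v; apply: (connect_ind (P := fun w => connect (adj H) w a || connect (adj H) w b)) (conG a v); last by rewrite connect0.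
  move=> u w h /(adj_split e) [hw|[[_ ->]|[_ ->]]]; last 2 first.
  - by rewrite connect0 orbT.
  - by rewrite connect0.
  have cw : connect (adj H) w u by rewrite connect_symG; apply: connect1.
  by case/orP: h => h; rewrite (connect_trans cw h) ?orbT.
have eqV : forall v, v \in vset I1 J1 -> v \in vset I2 J2 -> False.
  move=> v; rewrite V1 V2 => v1 v2; move/negP: V12; apply; apply/eqP.
  by rewrite V1 V2; apply/setP => y; rewrite (conn_C _ v1) (conn_C _ v2).
have in12 : forall v, (v \in vset I1 J1) || (v \in vset I2 J2).
  move=> v; have := cover x1; have := cover x2; have := cover v.
  rewrite V1 V2 !inE.
  case/orP=> [va|vb] /orP [x2a|x2b] /orP [x1a|x1b].
  - by exfalso; apply: (eqV a); rewrite ?V1 ?V2 inE.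
  - by apply/orP; right; apply: connect_trans x2a _; rewrite connect_symG.
  - by apply/orP; left; apply: connect_trans x1a _; rewrite connect_symG.
  - by exfalso; apply: (eqV b); rewrite ?V1 ?V2 inE.
  - by exfalso; apply: (eqV a); rewrite ?V1 ?V2 inE.
  - by apply/orP; left; apply: connect_trans x1b _; rewrite connect_symG.
  - by apply/orP; right; apply: connect_trans x2b _; rewrite connect_symG.
  - by exfalso; apply: (eqV b); rewrite ?V1 ?V2 inE.
have same1 : forall u v, u \in vset I1 J1 -> v \in vset I1 J1 -> connect (adj H) u v.
  by move=> u v; rewrite V1 => u1; rewrite (conn_C _ u1).
have same2 : forall u v, u \in vset I2 J2 -> v \in vset I2 J2 -> connect (adj H) u v.
  by move=> u v; rewrite V2 => u1; rewrite (conn_C _ u1).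
have notab : ~~ connect (adj H) a b.
  apply/negP => ab.
  have all_a : forall v, connect (adj H) a v.
    move=> v; case/orP: (cover v) => h; rewrite connect_symG in h => //.
    exact: connect_trans ab h.
  move/negP: V12; apply; apply/eqP; rewrite V1 V2; apply/setP => y; rewrite !inE.
  have c1 : connect (adj H) x1 y by apply: connect_trans (all_a y); rewrite connect_symG.
  have c2 : connect (adj H) x2 y by apply: connect_trans (all_a y); rewrite connect_symG.
  by rewrite c1 c2.
have notpq : ~~ connect (adj H) p q.
  apply/negP => pq; move/negP: notab; apply.
  apply: (connect_ind (P := fun w => connect (adj H) a w)) (conG' a b); last exact: connect0.
  move=> u w h /(adj_split e') [hw|[[Eu ->]|[Eu ->]]].
  - by apply: connect_trans h _; apply: connect1; rewrite EH.
  - by rewrite Eu in h; exact: connect_trans h pq.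
  - by rewrite Eu in h; apply: connect_trans h _; rewrite connect_symG.
have consI : forall (I : {set 'I_n}) (J : {set 'I_d}) x, vset I J = [set y | connect (adj H) x y] ->
    forall h, h \in G :\ e -> (h.1 \in I) = (h.2 \in J).
  by move=> I J x E h hH; rewrite -(@mem_vset_l n d I J) -(@mem_vset_r n d I J) E cons_C.
have ca := in12 a; have cb := in12 b; have cp := in12 p; have cq := in12 q.
rewrite /a /b /p /q !mem_vset_l !mem_vset_r in ca cb cp cq.
have da : ~~ ((e.1 \in I1) && (e.1 \in I2)).
  by apply/negP => /andP [h1 h2]; apply: (eqV a); rewrite /a mem_vset_l.
have db : ~~ ((e.2 \in J1) && (e.2 \in J2)).
  by apply/negP => /andP [h1 h2]; apply: (eqV b); rewrite /b mem_vset_r.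
have dp : ~~ ((e'.1 \in I1) && (e'.1 \in I2)).
  by apply/negP => /andP [h1 h2]; apply: (eqV p); rewrite /p mem_vset_l.
have dq : ~~ ((e'.2 \in J1) && (e'.2 \in J2)).
  by apply/negP => /andP [h1 h2]; apply: (eqV q); rewrite /q mem_vset_r.
have nab1 : ~~ ((e.1 \in I1) && (e.2 \in J1)).
  by apply/negP => /andP [h1 h2]; move/negP: notab; apply; apply: same1; rewrite ?mem_vset_l ?mem_vset_r.
have nab2 : ~~ ((e.1 \in I2) && (e.2 \in J2)).
  by apply/negP => /andP [h1 h2]; move/negP: notab; apply; apply: same2; rewrite ?mem_vset_l ?mem_vset_r.
have npq1 : ~~ ((e'.1 \in I1) && (e'.2 \in J1)).
  by apply/negP => /andP [h1 h2]; move/negP: notpq; apply; apply: same1; rewrite ?mem_vset_l ?mem_vset_r.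
have npq2 : ~~ ((e'.1 \in I2) && (e'.2 \in J2)).
  by apply/negP => /andP [h1 h2]; move/negP: notpq; apply; apply: same2; rewrite ?mem_vset_l ?mem_vset_r.
have inc1 : compatible G G' -> ~~ [&& e.1 \in I1, e.2 \in J2, e'.1 \in I1 & e'.2 \in J2].
  move=> comp; apply/negP => /and4P [h1 h2 h3 h4].
  apply: (incompat eG eG' ne EH) comp => //.
  - by apply: same2; rewrite ?mem_vset_r.
  - by apply: same1; rewrite ?mem_vset_l.
have inc2 : compatible G G' -> ~~ [&& e.1 \in I2, e.2 \in J1, e'.1 \in I2 & e'.2 \in J1].
  move=> comp; apply/negP => /and4P [h1 h2 h3 h4].
  apply: (incompat eG eG' ne EH) comp => //.
  - by apply: same1; rewrite ?mem_vset_r.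
  - by apply: same2; rewrite ?mem_vset_l.
have cmp1 : [&& e.1 \in I1, e.2 \in J2, e'.1 \in I2 & e'.2 \in J1] -> compatible G G'.
  case/and4P => h1 h2 h3 h4; apply: (compat_lemma acG eG eG' EH (consI _ _ _ V1)) => //.
  - by apply: contra db => ->.
  - by apply: contra dp => ->.
have cmp2 : [&& e.1 \in I2, e.2 \in J1, e'.1 \in I1 & e'.2 \in J2] -> compatible G G'.
  case/and4P => h1 h2 h3 h4; apply: (compat_lemma acG eG eG' EH (consI _ _ _ V2)) => //.
  - by apply: contra db => ->; rewrite andbT.
  - by apply: contra dp => ->; rewrite andbT.
have fwd : compatible G G' ->
    ((e.1 \in I1 /\ e.2 \in J2 /\ e'.1 \in I2 /\ e'.2 \in J1) \/
     (e.1 \in I2 /\ e.2 \in J1 /\ e'.1 \in I1 /\ e'.2 \in J2)).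
  move=> comp; have := inc1 comp; have := inc2 comp.
  have ea : (e.1 \in I2) = ~~ (e.1 \in I1) by move: ca da; case: (e.1 \in I1); case: (e.1 \in I2).
  have eb : (e.2 \in J2) = ~~ (e.2 \in J1) by move: cb db; case: (e.2 \in J1); case: (e.2 \in J2).
  have ep : (e'.1 \in I2) = ~~ (e'.1 \in I1) by move: cp dp; case: (e'.1 \in I1); case: (e'.1 \in I2).
  have eq : (e'.2 \in J2) = ~~ (e'.2 \in J1) by move: cq dq; case: (e'.2 \in J1); case: (e'.2 \in J2).
  rewrite ea eb ep eq; move: nab1 nab2 npq1 npq2; rewrite ea eb ep eq.
  case: (e.1 \in I1); case: (e.2 \in J1); case: (e'.1 \in I1); case: (e'.2 \in J1) => //=; by [left | right].
split; first split.
- exact: fwd.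
- case=> [[h1 [h2 [h3 h4]]]|[h1 [h2 [h3 h4]]]].
  + by apply: cmp1; rewrite h1 h2 h3 h4.
  + by apply: cmp2; rewrite h1 h2 h3 h4.
- move=> /fwd [[h1 [h2 [h3 h4]]]|[h1 [h2 [h3 h4]]]]; split; apply/eqP => E.
  + by move: dp; rewrite h3 -E h1.
  + by move: dq; rewrite h4 -E h2.
  + by move: dp; rewrite h3 -E h1.
  + by move: dq; rewrite h4 -E h2.
Qed.
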